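(* Let $n,m,k$ be positive integers and consider variables $x_0,\dots,x_n$, $y_0,\dots,y_n$, $z_0,\dots,z_m$, $t_0,\dots,t_m$. Define the $k\times(n+k)$ matrices $f_1,f_2$, the $k\times(m+k)$ matrices $f_3,f_4$, the $(n+k)\times k$ matrices $g_1,g_2$ and the $(m+k)\times k$ matrices $g_3,g_4$ by $(f_1)_{i,j}=y_{n+k+1-i-j}$, $(f_2)_{i,j}=x_{n+k+1-i-j}$ if $0\le n+k+1-i-j\le n$ and $0$ otherwise; $(f_3)_{i,j}=t_{m+k+1-i-j}$, $(f_4)_{i,j}=z_{m+k+1-i-j}$ if $0\le m+k+1-i-j\le m$ and $0$ otherwise; $(g_1)_{r,j}=x_{r-j}$, $(g_2)_{r,j}=y_{r-j}$ if $0\le r-j\le n$ and $0$ otherwise; $(g_3)_{r,j}=z_{r-j}$, $(g_4)_{r,j}=t_{r-j}$ if $0\le r-j\le m$ and $0$ otherwise. (So, e.g., the last row of $f_1$ is $(y_n,\dots,y_0,0,\dots,0)$, its first row is $(0,\dots,0,y_n,\dots,y_0)$, and the $j$-th column of $g_1$ has $x_0,\dots,x_n$ in rows $j,\dots,j+n$.) Let $f=\begin{bmatrix} f_1 & -f_2 & f_3 & -f_4\end{bmatrix}$ (a $k\times(2n+2m+4k)$ matrix) and $g=\begin{bmatrix} g_1\\ g_2\\ g_3\\ g_4\end{bmatrix}$ (a $(2n+2m+4k)\times k$ matrix). Then (i) $f\cdot g=0$, and (ii) $f$ and $g$ have maximal rank $k$ whenever the variables are evaluated at a point where not all of $x_0,\dots,x_n$,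 $y_0,\dots,y_n$, $z_0,\dots,z_m$, $t_0,\dots,t_m$ vanish (in particular at every point of $\mathbb{P}^n\times\mathbb{P}^n\times\mathbb{P}^m\times\mathbb{P}^m$ with these homogeneous coordinates).
   Context: Here $x_i$, $y_i$ are homogeneous coordinates on the first and second factor $\mathbb{P}^n$, and $z_i$, $t_i$ on the third and fourth factor $\mathbb{P}^m$, of $\mathbb{P}^n\times\mathbb{P}^n\times\mathbb{P}^m\times\mathbb{P}^m$. ''Maximal rank'' means the rank equals $\min$ of the number of rows and columns, here $k$. *)

(* Defs.v *)
From HB Require Import structures.
From mathcomp Require Import all_boot all_order all_algebra.
Set Implicit Arguments. Unset Strict Implicit. Unset Printing Implicit Defensive.
Import Order.TTheory GRing.Theory Num.Theory.
Local Open Scope ring_scope.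

Definition cf (R : comNzRingType) (n : nat) (a : 'I_n.+1 -> R) (d : int) : R :=
  if (0 <= d) && (d <= n%:Z) then a (inord `|d|%N) else 0.

(* Indices below are 0-based: row i' = i-1, column j' = j-1 of the paper.
   Paper: (F)_{i,j} = a_{p+k+1-i-j} = a_{p+k-1-i'-j'}. *)
Definition fblock (R : comNzRingType) (p k : nat) (a : 'I_p.+1 -> R)
  : 'M[R]_(k, p + k) :=
  \matrix_(i < k, j < p + k) cf a ((p + k)%:Z - 1 - i%:Z - j%:Z).

Definition gblock (R : comNzRingType) (p k : nat) (a : 'I_p.+1 -> R)
  : 'M[R]_(p + k, k) :=
  \matrix_(r < p + k, j < k) cf a (r%:Z - j%:Z).

Definition fmat (R : comNzRingType) (n m k : nat)
  (x y : 'I_n.+1 -> R) (z t : 'I_m.+1 -> R)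
  : 'M[R]_(k, (n + k) + (n + k) + (m + k) + (m + k)) :=
  row_mx (row_mx (row_mx (fblock k y) (- fblock k x)) (fblock k t)) (- fblock k z).

Definition gmat (R : comNzRingType) (n m k : nat)
  (x y : 'I_n.+1 -> R) (z t : 'I_m.+1 -> R)
  : 'M[R]_((n + k) + (n + k) + (m + k) + (m + k), k) :=
  col_mx (col_mx (col_mx (gblock k x) (gblock k y)) (gblock k z)) (gblock k t).

(* Main.v *)
Require Import Defs.
From HB Require Import structures.
From mathcomp Require Import all_boot all_order all_algebra.
Import GRing.Theory.
Local Open Scope ring_scope.
From mathcomp Require Import zify ring lra.
Import Order.TTheory GRing.Theory Num.Theory.
Local Open Scope ring_scope.
Set Implicit Arguments. Unset Strict Implicit.

Section S.
Variable R : comNzRingType.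
Variable p : nat.
Variable a : 'I_p.+1 -> R.

Lemma cfP (e : nat) : cf a (Posz e) = if (e <= p)%N then a (inord e) else 0.
Proof. by rewrite /cf lez_nat. Qed.

Lemma cfN (d : int) : d < 0 -> cf a d = 0.
Proof. by move=> d0; rewrite /cf (lt_geF d0). Qed.

Lemma cfE d : cf a d = \sum_(s < p.+1) (d == s%:Z)%:R * a s.
Proof.
case: d => e.
- rewrite cfP; case: leqP => he.
  + rewrite (bigD1 (inord e)) //= inordK // eqxx mul1r big1 ?addr0 // => s hs.
    case: eqP => [[es]|]; last by rewrite mul0r.
    by move/eqP: hs; case; apply/val_inj; rewrite /= inordK // es.
  + rewrite big1 // => s _; case: eqP => [[es]|]; last by rewrite mul0r.
    have := ltn_ord s; lia.
- rewrite cfN // big1 // => s _; by rewrite mul0r.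
Qed.
End S.
Section S2.
Variable R : comNzRingType.
Variable p : nat.
Variable a : 'I_p.+1 -> R.
Lemma fg_entry k (b : 'I_p.+1 -> R) (i l : 'I_k) :
  (fblock k a *m gblock k b) i l = \sum_(s < p.+1) \sum_(u < p.+1)
    ((s%:Z + u%:Z == (p+k)%:Z - 1 - i%:Z - l%:Z)%:R * (a s * b u)).
Proof.
rewrite !mxE.
under eq_bigr => r _ do rewrite !mxE cfE cfE big_distrl.
rewrite exchange_big; apply: eq_bigr => s _.
under eq_bigr => r _ do rewrite /= big_distrr.
rewrite exchange_big; apply: eq_bigr => u _ /=.
have hr : (u + l < p + k)%N by have := ltn_ord u; have := ltn_ord l; lia.
rewrite (bigD1 (Ordinal hr)) //= big1 ?addr0.
  have -> : (u + l)%N%:Z - l%:Z = u%:Z by rewrite PoszD addrK.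
  rewrite eqxx mul1r.
  have -> : ((p + k)%:Z - 1 - i%:Z - (u + l)%N%:Z == s%:Z) =
            (s%:Z + u%:Z == (p+k)%:Z - 1 - i%:Z - l%:Z).
    by apply/eqP/eqP; lia.
  by rewrite mulrA [_ * a s]mulrC -!mulrA.
move=> r hr'; case: (eqVneq (r%:Z - l%:Z) u) => [e|_]; last by rewrite mul0r mulr0.
by move/eqP: hr'; case; apply/val_inj => /=; lia.
Qed.

End S2.
Lemma fcomm (R : comNzRingType) p (a : 'I_p.+1 -> R) k (b : 'I_p.+1 -> R) : fblock k a *m gblock k b = fblock k b *m gblock k a.
Proof.
apply/matrixP => i l; rewrite fg_entry [RHS]fg_entry exchange_big; apply: eq_bigr => u _.
apply: eq_bigr => s _; by rewrite [(s%:Z + _)]addrC [a s * _]mulrC.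
Qed.

Section Rk.
Variable F : fieldType.

Lemma rank_colsub m n n' (g : 'I_n' -> 'I_n) (A : 'M[F]_(m,n)) :
  (\rank (colsub g A) <= \rank A)%N.
Proof.
have -> : colsub g A = A *m colsub g 1%:M by rewrite mulmx_colsub mulmx1.
exact: mxrankM_maxl.
Qed.

Lemma rank_rowsub m m' n (g : 'I_m' -> 'I_m) (A : 'M[F]_(m,n)) :
  (\rank (rowsub g A) <= \rank A)%N.
Proof. rewrite rowsubE; exact: mxrankM_maxr. Qed.

Lemma rank_rowl m n1 n2 (A : 'M[F]_(m,n1)) (B : 'M[F]_(m,n2)) :
  (\rank A <= \rank (row_mx A B))%N.
Proof.
have {1}-> : A = row_mx A B *m col_mx 1%:M 0 by rewrite mul_row_col mulmx1 mulmx0 addr0.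
exact: mxrankM_maxl.
Qed.

Lemma rank_rowr m n1 n2 (A : 'M[F]_(m,n1)) (B : 'M[F]_(m,n2)) :
  (\rank B <= \rank (row_mx A B))%N.
Proof.
have {1}-> : B = row_mx A B *m col_mx 0 1%:M by rewrite mul_row_col mulmx1 mulmx0 add0r.
exact: mxrankM_maxl.
Qed.

Lemma rank_colu m1 m2 n (A : 'M[F]_(m1,n)) (B : 'M[F]_(m2,n)) :
  (\rank A <= \rank (col_mx A B))%N.
Proof.
have {1}-> : A = row_mx 1%:M 0 *m col_mx A B by rewrite mul_row_col mul1mx mul0mx addr0.
exact: mxrankM_maxr.
Qed.

Lemma rank_cold m1 m2 n (A : 'M[F]_(m1,n)) (B : 'M[F]_(m2,n)) :
  (\rank B <= \rank (col_mx A B))%N.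
Proof.
have {1}-> : B = row_mx 0 1%:M *m col_mx A B by rewrite mul_row_col mul1mx mul0mx add0r.
exact: mxrankM_maxr.
Qed.

Lemma trig_rank k (T : 'M[F]_k) : (forall i j : 'I_k, (i < j)%N -> T i j = 0) ->
  (forall i, T i i != 0) -> \rank T = k.
Proof.
move=> h1 h2; apply: mxrank_unit.
rewrite unitmxE (det_trig (introT is_trig_mxP h1)) unitfE.
by apply/prodf_neq0 => i _; exact: h2.
Qed.

Lemma fblock_rank p k (a : 'I_p.+1 -> F) : (exists i, a i != 0) -> \rank (fblock k a) = k.
Proof.
case=> i0 hi0.
case: (@arg_maxnP _ i0 (fun i => a i != 0) (fun i : 'I_p.+1 => (i : nat)) hi0) => j aj jmax.
have hlt : forall c : 'I_k, (p + k - 1 - j - c < p + k)%N.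
  by move=> c; have := ltn_ord c; lia.
apply/eqP; rewrite eqn_leq rank_leq_row /=.
have H := rank_colsub (fun c : 'I_k => Ordinal (hlt c)) (fblock k a).
apply: (leq_trans _ H).
rewrite trig_rank //.
- move=> r c rc; rewrite mxE /fblock mxE /=.
  have hj := ltn_ord j.
  have -> : (p + k)%:Z - 1 - r%:Z - (p + k - 1 - j - c)%N%:Z = (j + c - r)%N%:Z.
    by have := ltn_ord c; lia.
  rewrite cfP; case: ifP => // he.
  case: (eqVneq (a (inord (j + c - r))) 0) => // /jmax.
  rewrite inordK; lia.
- move=> c; rewrite mxE /fblock mxE /=.
  have hj := ltn_ord j.
  have -> : (p + k)%:Z - 1 - c%:Z - (p + k - 1 - j - c)%N%:Z = j%:Z.
    by have := ltn_ord c; lia.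
  by rewrite cfP -ltnS hj inord_val.
Qed.

Lemma gblock_rank p k (a : 'I_p.+1 -> F) : (exists i, a i != 0) -> \rank (gblock k a) = k.
Proof.
case=> i0 hi0.
case: (@arg_minnP _ i0 (fun i => a i != 0) (fun i : 'I_p.+1 => (i : nat)) hi0) => j aj jmin.
have hlt : forall c : 'I_k, (j + c < p + k)%N.
  by move=> c; have := ltn_ord c; have := ltn_ord j; lia.
apply/eqP; rewrite eqn_leq rank_leq_col /=.
apply: (leq_trans _ (rank_rowsub (fun c => Ordinal (hlt c)) _)).
rewrite trig_rank //.
- move=> r c rc; rewrite mxE /gblock mxE /=.
  case: (leqP c (j + r)) => hc.
    have -> : (j + r)%N%:Z - c%:Z = (j + r - c)%N%:Z by lia.
    rewrite cfP; case: ifP => // he.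
    case: (eqVneq (a (inord (j + r - c))) 0) => // /jmin.
    rewrite inordK; lia.
  by rewrite cfN //; lia.
- move=> c; rewrite mxE /gblock mxE /=.
  have hj := ltn_ord j.
  have -> : (j + c)%N%:Z - c%:Z = j%:Z by lia.
  by rewrite cfP -ltnS hj inord_val.
Qed.
End Rk.

Theorem lemma4p1 (n m k : nat) (hn : (0 < n)%N) (hm : (0 < m)%N) (hk : (0 < k)%N) :
  (forall (R : comNzRingType) (x y : 'I_n.+1 -> R) (z t : 'I_m.+1 -> R),
      fmat k x y z t *m gmat k x y z t = 0)
  /\
  (forall (F : fieldType) (x y : 'I_n.+1 -> F) (z t : 'I_m.+1 -> F),
      ((exists i, x i != 0) \/ (exists i, y i != 0) \/
       (exists i, z i != 0) \/ (exists i, t i != 0)) ->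
      \rank (fmat k x y z t) = k /\ \rank (gmat k x y z t) = k).
Proof.
split.
  move=> R x y z t; rewrite /fmat /gmat !mul_row_col !mulNmx (fcomm x k y) (fcomm z k t).
  by rewrite subrr add0r subrr.
move=> F x y z t H; split; apply/eqP; rewrite eqn_leq ?rank_leq_row ?rank_leq_col /=.
- case: H => [H|[H|[H|H]]]; rewrite /fmat.
  + rewrite -{1}(fblock_rank k H) -mxrank_opp.
    exact: leq_trans (rank_rowr _ _) (leq_trans (rank_rowl _ _) (rank_rowl _ _)).
  + rewrite -{1}(fblock_rank k H).
    exact: leq_trans (rank_rowl _ _) (leq_trans (rank_rowl _ _) (rank_rowl _ _)).
  + rewrite -{1}(fblock_rank k H) -mxrank_opp.
    exact: rank_rowr.
  + rewrite -{1}(fblock_rank k H).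
    exact: leq_trans (rank_rowr _ _) (rank_rowl _ _).
- case: H => [H|[H|[H|H]]]; rewrite /gmat.
  + rewrite -{1}(gblock_rank k H).
    exact: leq_trans (rank_colu _ _) (leq_trans (rank_colu _ _) (rank_colu _ _)).
  + rewrite -{1}(gblock_rank k H).
    exact: leq_trans (rank_cold _ _) (leq_trans (rank_colu _ _) (rank_colu _ _)).
  + rewrite -{1}(gblock_rank k H).
    exact: leq_trans (rank_cold _ _) (rank_colu _ _).
  + rewrite -{1}(gblock_rank k H).
    exact: rank_cold.
Qed.
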